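(* In the setting described in the context, let $D\subseteq A\subseteq D\cup T$. Let $L\in\Pi_A$ with $\dim\operatorname{span}\langle L,L^*\rangle_A=2|L|-1$. Let $[e_1,e_2]\in T\setminus A$ with $e_1\in L$. Then $[e_1,e_2]\notin\operatorname{span}\langle L,L^*\rangle_A$ if and only if $e_2\notin L^*_A$.
   Context: Let $n\ge4$, $V=\{0,\dots,n-1\}$, and let $E=\{(u,v)\in V\times V:u\ne v\}$ be the set of arcs, written $uv$. Let $\chi_e\in\mathbb R^E$ be unit vectors and $\chi_F=\sum_{e\in F}\chi_e$. Let $\delta^\pm(w)$ be the arcs leaving/entering $w$, let $\delta^+(S)=\{uv:u\in S,v\notin S\}$, let $\mathcal S=\{S\subset V:2\le|S|\le n-2\}$, and let $x(F)=\sum_{e\in F}x_e$. The polytope is $P^n=\{x\in\mathbb R^E: x(\delta^+(w))=x(\delta^-(w))=1\ \forall w,\ x(\delta^+(S))\ge1\ \forall S\in\mathcal S,\ x\ge0\}$. Fix $\bar x\in P^n\cap\{0,\tfrac12\}^E$ and let $E_{\bar x}=\{e:\bar x_e=\tfrac12\}$. For $a\in\{0,1\}^E$ let $\mathrm{pr}(a)=\sum_{e\in E_{\bar x}}a_e\chi_e$. Let $\mathcal S_{\bar x}=\{S\in\mathcal S:\bar x(\delta^+(S))=1\}$. Define the sets $$D=\{\mathrm{pr}(\chi_{\delta^+(u)}),\mathrm{pr}(\chi_{\delta^-(u)}):u\in V\}, \qquad T=\{\mathrm{pr}(\chi_{\delta^+(S)}):S\in\mathcal S_{\bar x}\}.$$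 Every vector of $D\cup T$ equals $\chi_{e_1}+\chi_{e_2}$ for two distinct arcs $e_1,e_2\in E_{\bar x}$; it is written $[e_1,e_2]=[e_2,e_1]$. Let $A$ be a set with $D\subseteq A\subseteq D\cup T$. On $E_{\bar x}$ define the relation $e\sim_A e'$ iff there is $\bar e\in E_{\bar x}$ with $[e,\bar e]\in A$ and $[\bar e,e']\in A$. Let $\equiv_A$ be its transitive closure; this is an equivalence relation. The equivalence classes are called circuits, and they form the circuit partition $\Pi_A$ of $E_{\bar x}$. For $L\in\Pi_A$, the set $\{\bar e\in E_{\bar x}:\exists e\in L,\ [e,\bar e]\in A\}$ is nonempty and contained in a unique circuit, denoted $L^*_A$ and called the dual of $L$. The pair $\{L,L^*_A\}$ is a circuit pair. $L$ is called shorted if $L^*_A=L$. Define $\langle L,L^*\rangle_A=\{[e,\bar e]\in A: e\in L,\ \bar e\in L^*_A\}$. *)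

(* Defs.v *)
(* Vectors of R^E are finite functions {ffun darc n -> R^o},
   which carry a canonical vectType structure (vector.v). *)
From HB Require Import structures.
From mathcomp Require Import all_boot all_order all_algebra.
Set Implicit Arguments. Unset Strict Implicit. Unset Printing Implicit Defensive.
Import Order.TTheory GRing.Theory Num.Theory.
Local Open Scope ring_scope.

(* arcs of the complete digraph on V = {0,...,n-1}: ordered pairs (u,v), u <> v *)
Definition darc (n : nat) := {p : 'I_n * 'I_n | p.1 != p.2}.

Section Setting.
Variable n : nat.
Variable R : realFieldType.

Definition tail (e : darc n) : 'I_n := (val e).1.
Definition head (e : darc n) : 'I_n := (val e).2.

Definition dout (w : 'I_n) : {set darc n} := [set e | tail e == w].
Definition din (w : 'I_n) : {set darc n} := [set e | head e == w].
Definition doutS (S : {set 'I_n}) : {set darc n} :=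
  [set e | (tail e \in S) && (head e \notin S)].

Definition xsum (x : darc n -> R) (F : {set darc n}) : R := \sum_(e in F) x e.

Definition inS (S : {set 'I_n}) : bool := (2 <= #|S|)%N && (#|S| <= n - 2)%N.

Definition inPn (x : darc n -> R) : Prop :=
  [/\ forall w, xsum x (dout w) = 1,
      forall w, xsum x (din w) = 1,
      forall S, inS S -> 1 <= xsum x (doutS S)
    & forall e, 0 <= x e].

Definition half_integral (x : darc n -> R) : Prop :=
  forall e, x e = 0 \/ x e = 2^-1.

Definition vec := {ffun darc n -> R^o}.

Definition chi (F : {set darc n}) : vec := [ffun e => (e \in F)%:R].
Definition chi1 (e : darc n) : vec := chi [set e].

Variable x : darc n -> R.

Definition Ex : {set darc n} := [set e | x e == 2^-1].

Definition pr (a : vec) : vec := [ffun e => if e \in Ex then a e else 0].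

Definition inSx (S : {set 'I_n}) : bool := inS S && (xsum x (doutS S) == 1).

Definition Dset : pred vec :=
  [pred v | [exists u : 'I_n, (v == pr (chi (dout u))) || (v == pr (chi (din u)))]].

Definition Tset : pred vec :=
  [pred v | [exists S : {set 'I_n}, inSx S && (v == pr (chi (doutS S)))]].

(* [e1,e2] = chi_{e1} + chi_{e2}  (used only for distinct arcs) *)
Definition br (e1 e2 : darc n) : vec := chi1 e1 + chi1 e2.

Variable A : pred vec.

Definition simA : rel (darc n) := fun e e' =>
  [&& e \in Ex, e' \in Ex &
   [exists eb, [&& eb \in Ex, e != eb, eb != e', br e eb \in A & br eb e' \in A]]].

Definition equivA (e e' : darc n) : bool := [exists e2, simA e e2 && connect simA e2 e'].

Definition circuit_of (e : darc n) : {set darc n} := [set e' in Ex | equivA e e'].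

Definition is_circuit (L : {set darc n}) : Prop :=
  exists2 e, e \in Ex & L = circuit_of e.

Definition nbr (L : {set darc n}) : {set darc n} :=
  [set eb in Ex | [exists e in L, (e != eb) && (br e eb \in A)]].

(* the dual L^*_A: the circuit containing nbr L *)
Definition dual (L : {set darc n}) : {set darc n} :=
  if [pick eb in nbr L] is Some eb then circuit_of eb else set0.

Definition pairLL (L : {set darc n}) : seq vec :=
  [seq br p.1 p.2 | p <- enum [set p : darc n * darc n |
      [&& p.1 \in L, p.2 \in dual L, p.1 != p.2 & br p.1 p.2 \in A]]].

End Setting.

(* Main.v *)
Require Import Defs.
From HB Require Import structures.
From mathcomp Require Import all_boot all_order all_algebra.
From mathcomp Require Import zify.
Set Implicit Arguments. Unset Strict Implicit. Unset Printing Implicit Defensive.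
Import Order.TTheory GRing.Theory Num.Theory.
Local Open Scope ring_scope.

Section Aux.
Variables (n : nat) (R : realFieldType) (x : darc n -> R) (A : pred (@vec n R)).
Hypotheses (hP : inPn x) (hh : half_integral x) (hD : {subset Dset x <= A})
  (hA : forall v, v \in A -> (v \in Dset x) || (v \in Tset x)).

Lemma brE (a b e : darc n) : @br n R a b e = (e == a)%:R + (e == b)%:R.
Proof. by rewrite /br /chi1 /chi !ffunE !inE. Qed.

Lemma A_Ex v e : v \in A -> e \notin Ex x -> v e = 0.
Proof.
move=> /hA /orP [] /existsP [u].
- by case/orP => /eqP -> he; rewrite ffunE (negbTE he).
- by case/andP => _ /eqP -> he; rewrite ffunE (negbTE he).
Qed.

Definition adj (a b : darc n) := (a != b) && (@br n R a b \in A).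

Lemma adj_sym a b : adj a b = adj b a.
Proof. by rewrite /adj eq_sym /br addrC. Qed.

Lemma adjEx a b : adj a b -> (a \in Ex x) && (b \in Ex x).
Proof.
case/andP => ab hb; apply/andP; split; apply/negPn/negP => he;
  have := A_Ex hb he; rewrite brE eqxx.
- by rewrite (negbTE ab) addr0 => /eqP; rewrite oner_eq0.
- by rewrite eq_sym (negbTE ab) add0r => /eqP; rewrite oner_eq0.
Qed.

Lemma simAE a b : simA x A a b = [exists m, adj a m && adj m b].
Proof.
apply/idP/idP.
- case/and3P => _ _ /existsP [m /and5P [_ h1 h2 h3 h4]].
  by apply/existsP; exists m; rewrite /adj h1 h2 h3 h4.
- case/existsP => m /andP [h1 h2].
  have /andP [aE mE] := adjEx h1; have /andP [_ bE] := adjEx h2.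
  move: h1 h2; rewrite /adj => /andP [h1 h3] /andP [h2 h4].
  by rewrite /simA aE bE; apply/existsP; exists m; rewrite mE h1 h2 h3 h4.
Qed.


Lemma xE e : x e = (e \in Ex x)%:R / 2.
Proof.
rewrite /Ex inE; case: (hh e) => ->.
- have -> : ((0 : R) == 2^-1) = false.
    by apply/negbTE; rewrite eq_sym invr_eq0 pnatr_eq0.
  by rewrite mul0r.
- by rewrite eqxx mul1r.
Qed.

Lemma out2 u : #|Ex x :&: dout u| = 2%N.
Proof.
case: hP => h1 _ _ _; have := h1 u; rewrite /xsum.
under eq_bigr => e _ do rewrite xE.
rewrite -mulr_suml.
have -> : \sum_(i in dout u) ((i \in Ex x)%:R : R) = #|Ex x :&: dout u|%:R.
  rewrite (eq_bigr (fun i => if i \in Ex x then (1 : R) else 0)); last first.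
    by move=> i _; case: (i \in Ex x).
  rewrite -big_mkcondr /=.
  have -> : #|Ex x :&: dout u| = #|[pred i | (i \in dout u) && (i \in Ex x)]|.
    by apply: eq_card => i; rewrite !inE andbC.
  by rewrite sumr_const.
move/(congr1 (fun t => t * 2)); rewrite -mulrA mulVf ?pnatr_eq0 // mulr1 mul1r.
by move/eqP; rewrite (eqr_nat R _ 2) => /eqP.
Qed.

Definition sig (e : darc n) : darc n :=
  odflt e [pick f in Ex x :&: dout (tail e) | f != e].

Lemma sigP e : e \in Ex x ->
  [/\ sig e \in Ex x :&: dout (tail e), sig e != e &
      Ex x :&: dout (tail e) = [set e; sig e]].
Proof.
move=> eE.
have eS : e \in Ex x :&: dout (tail e).
  rewrite in_setI eE /=; rewrite /dout in_set; by [].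
have /cards2P [a [b [ab HS]]] : #|Ex x :&: dout (tail e)| == 2%N by rewrite out2.
rewrite /sig; case: (pickP (fun f => (f \in Ex x :&: dout (tail e)) && (f != e))) => [f /andP [fS fe] | none] /=.
- split => //; rewrite HS; move: eS fS; rewrite HS !inE.
  move=> /orP [] /eqP eA /orP [] /eqP fA; subst.
  + by rewrite eqxx in fe.
  + by [].
  + by rewrite setUC.
  + by rewrite eqxx in fe.
- exfalso.
  have := none a; have := none b; rewrite HS !inE !eqxx /= orbT => /negbT.
  rewrite negbK => /eqP Hb /negbT; rewrite negbK => /eqP Ha.
  by rewrite Ha Hb eqxx in ab.
Qed.

Lemma sig_tail e : e \in Ex x -> tail (sig e) = tail e.
Proof. by case/sigP => /setIP [_]; rewrite inE => /eqP. Qed.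

Lemma sig_Ex e : e \in Ex x -> sig e \in Ex x.
Proof. by case/sigP => /setIP []. Qed.

Lemma sig_inv e : e \in Ex x -> sig (sig e) = e.
Proof.
move=> eE; have [h1 h2 h3] := sigP eE.
have fE := sig_Ex eE.
have [g1 g2 g3] := sigP fE.
move: g1; rewrite (sig_tail eE) h3 !inE => /orP [] /eqP // Hf.
by rewrite Hf eqxx in g2.
Qed.

Lemma sig_adj e : e \in Ex x -> adj e (sig e).
Proof.
move=> eE; have [h1 h2 h3] := sigP eE.
rewrite /adj eq_sym h2 /=; apply: hD.
have -> : @br n R e (sig e) = pr x (@chi n R (dout (tail e))).
  apply/ffunP => f; rewrite brE !ffunE.
  have Hf : (f \in Ex x) && (f \in dout (tail e)) = (f == e) || (f == sig e).
    by rewrite -in_setI h3 !inE.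
  case fE: (f \in Ex x); move: Hf; rewrite fE /=.
  - move=> ->; case: (eqVneq f e) => [->|fe] /=.
    + by rewrite eq_sym (negbTE h2) addr0.
    + by rewrite add0r.
  - by move/esym/norP => [/negbTE -> /negbTE ->]; rewrite addr0.
by apply/existsP; exists (tail e); rewrite eqxx.
Qed.

Lemma simA_refl e : e \in Ex x -> simA x A e e.
Proof.
move=> eE; rewrite simAE; apply/existsP; exists (sig e).
by rewrite sig_adj // adj_sym sig_adj.
Qed.

Lemma simA_sym : symmetric (simA x A).
Proof.
move=> a b; rewrite !simAE; apply/existsP/existsP => [[m /andP [h1 h2]]|[m /andP [h1 h2]]];
  by exists m; rewrite adj_sym h2 adj_sym h1.
Qed.

Lemma csym : connect_sym (simA x A).
Proof. exact: sym_connect_sym simA_sym. Qed.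

Lemma equivAE a b : a \in Ex x -> equivA x A a b = connect (simA x A) a b.
Proof.
move=> aE; apply/existsP/idP => [[m /andP [h1 h2]]|h].
- exact: connect_trans (connect1 h1) h2.
- by exists a; rewrite simA_refl.
Qed.

Lemma circE a : a \in Ex x ->
  circuit_of x A a = [set y in Ex x | connect (simA x A) a y].
Proof. by move=> aE; apply/setP => y; rewrite !inE equivAE. Qed.

Lemma circ_Ex a y : y \in circuit_of x A a -> y \in Ex x.
Proof. by rewrite inE => /andP []. Qed.

Lemma circ_eq a b : a \in Ex x -> b \in circuit_of x A a ->
  circuit_of x A b = circuit_of x A a.
Proof.
move=> aE; rewrite circE // inE => /andP [bE ab].
rewrite !circE //; apply/setP => y; rewrite !inE.
by rewrite (same_connect csym ab).
Qed.

Lemma shift a b a' b' : connect (simA x A) a b -> adj a' a -> adj b b' ->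
  connect (simA x A) a' b'.
Proof.
move/connectP => [p pth ->] {b}.
elim: p a a' pth => [|y p IH] a a' /= pth h1 h2.
- by apply: connect1; rewrite simAE; apply/existsP; exists a; rewrite h1 h2.
- case/andP: pth; rewrite simAE => /existsP [c /andP [ac cy]] pth'.
  have h : simA x A a' c by rewrite simAE; apply/existsP; exists a; rewrite h1 ac.
  exact: connect_trans (connect1 h) (IH _ _ pth' cy h2).
Qed.



Lemma phi_span (w : darc n -> R) (X : seq (@vec n R)) v :
  (forall u, u \in X -> \sum_e w e * u e = 0) -> v \in <<X>>%VS ->
  \sum_e w e * v e = 0.
Proof.
move=> H /(@coord_span _ _ _ (in_tuple X)) ->.
under eq_bigr => e _ do rewrite sum_ffunE mulr_sumr.
rewrite exchange_big /= big1 // => i _.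
under eq_bigr => e _ do rewrite ffunE mulrCA.
by rewrite -mulr_sumr H ?mulr0 //; apply: mem_nth.
Qed.

Lemma phi_1 (w : darc n -> R) a :
  \sum_e w e * ((e == a)%:R : R) = w a.
Proof.
rewrite (bigD1 a) //= eqxx mulr1 big1 ?addr0 // => e /negbTE ->; exact: mulr0.
Qed.

Lemma phi_br (w : darc n -> R) a b :
  \sum_e w e * @br n R a b e = w a + w b.
Proof.
under eq_bigr => e _ do rewrite brE mulrDr.
by rewrite big_split /= !phi_1.
Qed.

Lemma main_aux (L : {set darc n}) (e1 e2 : darc n) :
  is_circuit x A L ->
  \dim <<pairLL x A L>>%VS = (2 * #|L| - 1)%N ->
  e1 != e2 -> e1 \in L ->
  (@br n R e1 e2 \notin <<pairLL x A L>>%VS) <-> (e2 \notin dual x A L).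
Proof.
move=> [c cE Lc] hdim e12 e1L.
have LEx y : y \in L -> y \in Ex x by rewrite Lc => /circ_Ex.
have e1E := LEx _ e1L.
have LeqL y : y \in L -> L = circuit_of x A y.
  by move=> yL; rewrite Lc (circ_eq cE) // -Lc.
set Ld := dual x A L.
have dualP : Ld = set0 \/ exists eb e0,
    [/\ eb \in Ex x, e0 \in L, adj e0 eb & Ld = circuit_of x A eb].
  rewrite /Ld /dual; case: pickP => [eb ebN | _]; [right | by left].
  move: ebN; rewrite /nbr inE => /andP [ebE /existsP [e0 /andP [e0L h]]].
  by exists eb, e0; split.
have LdEx y : y \in Ld -> y \in Ex x.
  by case: dualP => [->|[eb [e0 [_ _ _ ->]]]]; [rewrite inE | move/circ_Ex].
have disj y : L != Ld -> y \in L -> y \notin Ld.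
  move=> ne yL; apply/negP => yLd; move/negP: ne; apply.
  case: dualP yLd => [->|[eb [e0 [ebE _ _ HLd]]]]; first by rewrite inE.
  by rewrite HLd => yc; rewrite (LeqL _ yL) (circ_eq ebE yc).
have pairP v : v \in pairLL x A L -> exists p1 p2,
    [/\ p1 \in L, p2 \in Ld, p1 != p2 & v = @br n R p1 p2].
  case/mapP => [[p1 p2]]; rewrite mem_enum inE /= => /and4P [h1 h2 h3 _] ->.
  by exists p1, p2.
split.
- move=> H; apply/negP => e2Ld; move/negP: H; apply.
  case: dualP => [HLd|[eb [e0 [ebE e0L ae HLd]]]]; first by rewrite HLd inE in e2Ld.
  have Dual2 g z : g \in Ld -> adj g z -> z \in L.
    rewrite HLd circE // inE => /andP [_ cg] gz.
    have /andP [_ zE] := adjEx gz.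
    rewrite (LeqL _ e0L) circE ?LEx // inE zE /=.
    exact: shift cg ae gz.
  have cardLd : (#|Ld| <= #|L|)%N.
    have <- : #|[set sig g | g in Ld]| = #|Ld|.
      apply: card_in_imset => a b aL bL hab.
      by rewrite -(sig_inv (LdEx _ aL)) hab sig_inv // LdEx.
    apply: subset_leq_card; apply/subsetP => z /imsetP [g gLd ->].
    exact: Dual2 gLd (sig_adj (LdEx _ gLd)).
  set B := [seq @chi1 n R e - @chi1 n R e1 | e <- enum (L :\ e1)] ++
           [seq @chi1 n R g + @chi1 n R e1 | g <- enum Ld].
  have sub : (<<pairLL x A L>> <= <<B>>)%VS.
    apply/span_subvP => v /pairP [p1 [p2 [h1 h2 h12 ->]]].
    have inB2 : @chi1 n R p2 + @chi1 n R e1 \in <<B>>%VS.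
      by apply: memv_span; rewrite mem_cat; apply/orP; right; apply: map_f; rewrite mem_enum.
    case: (eqVneq p1 e1) => [->|ne].
    + by rewrite /br addrC.
    + have -> : @br n R p1 p2 = (@chi1 n R p1 - @chi1 n R e1) + (@chi1 n R p2 + @chi1 n R e1).
        by rewrite /br addrACA addNr addr0.
      apply: memvD => //; apply: memv_span; rewrite mem_cat; apply/orP; left.
      by apply: map_f; rewrite mem_enum !inE ne.
  have sizeB : (size B <= 2 * #|L| - 1)%N.
    rewrite size_cat !size_map -!cardE.
    have := cardsD1 e1 L; rewrite e1L => hc.
    move: cardLd; rewrite hc; move: #|Ld| #|L :\ e1| => a b /=; lia.
  have := dimv_leqif_eq sub; case=> _ /esym.
  have -> : (\dim <<pairLL x A L>> == \dim <<B>>) = true.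
    by rewrite eqn_leq dimvS // hdim (leq_trans (dim_span B)).
  move/eqP => ->; apply: memv_span; rewrite mem_cat; apply/orP; right.
  by rewrite /br addrC; apply: map_f; rewrite mem_enum.
- move=> e2Ld; apply/negP => Hin.
  case e2L : (e2 \in L).
  + have ne : L != Ld by apply/negP => /eqP eq; rewrite -eq e2L in e2Ld.
    pose w e := ((e \in L)%:R : R) - (e \in Ld)%:R.
    have key : \sum_e w e * @br n R e1 e2 e = 0.
      apply: (phi_span _ Hin) => u /pairP [p1 [p2 [h1 h2 h12 ->]]].
      rewrite phi_br /w h1 h2 (negbTE (disj _ ne h1)).
      case p2L : (p2 \in L); first by move: (disj _ ne p2L); rewrite h2.
      by rewrite subr0 sub0r subrr.
    move: key; rewrite phi_br /w e1L e2L (negbTE (disj _ ne e1L)) (negbTE e2Ld) subr0.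
    by move/eqP; rewrite -natrD pnatr_eq0.
  + pose w e := ((e == e2)%:R : R).
    have key : \sum_e w e * @br n R e1 e2 e = 0.
      apply: (phi_span _ Hin) => u /pairP [p1 [p2 [h1 h2 h12 ->]]].
      rewrite phi_br /w.
      have -> : (p1 == e2) = false by apply/negbTE; apply: contraFN e2L => /eqP <-.
      have -> : (p2 == e2) = false by apply/negbTE; apply: contra e2Ld => /eqP <-.
      by rewrite addr0.
    move: key; rewrite phi_br /w eqxx (negbTE e12) add0r.
    by move/eqP; rewrite oner_eq0.
Qed.

End Aux.

Theorem mainTheorem7 (n : nat) (R : realFieldType) (x : darc n -> R)
  (A : pred (@vec n R)) (L : {set darc n}) (e1 e2 : darc n) :
  (4 <= n)%N ->
  inPn x -> half_integral x ->
  {subset Dset x <= A} ->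
  (forall v, v \in A -> (v \in Dset x) || (v \in Tset x)) ->
  is_circuit x A L ->
  \dim <<pairLL x A L>>%VS = (2 * #|L| - 1)%N ->
  e1 != e2 ->
  @br n R e1 e2 \in Tset x -> @br n R e1 e2 \notin A -> e1 \in L ->
  (@br n R e1 e2 \notin <<pairLL x A L>>%VS) <-> (e2 \notin dual x A L).
Proof.
move=> _ hP hh hD hA hL hdim e12 _ _ e1L.
exact: (main_aux hP hh hD hA hL hdim e12 e1L).
Qed.
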